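(* In the setting of the D2EAL algorithm (without periodic reset) described in the context, fix an agent $i$ with $d_i(0)\ge2$ and assume $\Omega_i(t)\subseteq\Omega_i(t-1)$ for all $t=1,\dots,T$. With $\eta_\alpha>0$ arbitrary and the choice $\eta_w=\sqrt{8\log d_i(0)/T}$, $$R_i^S(T):=\hat L_{T,i}-\min_{j\in\Lambda_i(T)}\bar L_{T,j}\le\sqrt{\tfrac{T}{2}\log d_i(0)}.$$
   Context: Setup. There are $N\ge 1$ agents indexed by $i\in[N]$ and a horizon $T\ge1$. The outcome space $\mathcal Y$ and action space $\mathcal A$ are convex subsets of $\mathbb R^n$. The loss $l:\mathcal A\times\mathcal Y\to[0,1]$ is convex in its first argument. The target sequence $y_1,\dots,y_T\in\mathcal Y$ is arbitrary. For each agent $i$ and each $t\ge1$, an ''expert'' supplies an arbitrary prediction $f_{t,i}\in\mathcal A$ of $y_t$ (available at time $t-1$). Agents communicate over a time-varying undirected graph; $\Omega_i(t)$ is the set of neighbours of agent $i$ at time $t$, $\Lambda_i(t):=\Omega_i(t)\cup\{i\}$ and $d_i(t):=|\Lambda_i(t)|$. D2EAL (without periodic reset). Initialize $\hat f_{0,i}=f_{1,i}$, $\hat\alpha_i(0)=\hat\alpha'_i(0)=\hat w_{ii}(0)=1$ for all $i$. For $t=0,1,\dots,T-1$, each agent $i$ computes: $\alpha_i(t)=\hat\alpha_i(t)/(\hat\alpha_i(t)+\hat\alpha'_i(t))$; individual prediction $\bar f_{t+1,i}=\alpha_i(t)f_{t+1,i}+(1-\alpha_i(t))\hat f_{t,i}$;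 social weights $w_{ij}(t)=\hat w_{jj}(t)/\sum_{j'\in\Lambda_i(t)}\hat w_{j'j'}(t)$ for $j\in\Lambda_i(t)$ and $w_{ij}(t)=0$ otherwise; social prediction $\hat f_{t+1,i}=\sum_{j\in\Lambda_i(t)}w_{ij}(t)\bar f_{t+1,j}$. After $y_{t+1}$ is revealed, define the losses $l_{t+1,i}=l(f_{t+1,i},y_{t+1})$, $\hat l^-_{t+1,i}=l(\hat f_{t,i},y_{t+1})$, $\bar l_{t+1,i}=l(\bar f_{t+1,i},y_{t+1})$, $\hat l_{t+1,i}=l(\hat f_{t+1,i},y_{t+1})$, and update $\hat\alpha_i(t+1)=\hat\alpha_i(t)e^{-\eta_\alpha l_{t+1,i}}$, $\hat\alpha'_i(t+1)=\hat\alpha'_i(t)e^{-\eta_\alpha \hat l^-_{t+1,i}}$, $\hat w_{ii}(t+1)=\hat w_{ii}(t)e^{-\eta_w\bar l_{t+1,i}}$. Cumulative losses: $L_{T,i}=\sum_{t=1}^T l_{t,i}$, $\hat L^-_{T,i}=\sum_{t=1}^T\hat l^-_{t,i}$, $\bar L_{T,i}=\sum_{t=1}^T\bar l_{t,i}$, $\hat L_{T,i}=\sum_{t=1}^T\hat l_{t,i}$. *)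

(* Defs.v *)
From HB Require Import structures.
From mathcomp Require Import all_boot all_order all_algebra.
From mathcomp Require Import all_classical all_reals all_analysis.
Set Implicit Arguments. Unset Strict Implicit. Unset Printing Implicit Defensive.
Import Order.TTheory GRing.Theory Num.Theory.
Local Open Scope ring_scope.

Definition convex_subset (R : realType) (n : nat) (S : 'rV[R]_n -> Prop) :=
  forall (a b : 'rV[R]_n) (lam : R), S a -> S b -> 0 <= lam <= 1 ->
    S (lam *: a + (1 - lam) *: b).

Definition convex_in_first (R : realType) (n : nat)
    (A Y : 'rV[R]_n -> Prop) (l : 'rV[R]_n -> 'rV[R]_n -> R) :=
  forall (a b yv : 'rV[R]_n) (lam : R), A a -> A b -> Y yv -> 0 <= lam <= 1 ->
    l (lam *: a + (1 - lam) *: b) yv <= lam * l a yv + (1 - lam) * l b yv.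

Definition Lam (N : nat) (Omega : nat -> 'I_N -> {set 'I_N}) (t : nat) (i : 'I_N)
  : {set 'I_N} := i |: Omega t i.

(* State of agent i at time t: (hat alpha_i(t), hat alpha'_i(t), hat w_ii(t), hat f_{t,i}) *)
Record st (R : realType) (n : nat) := St {
  ah : R; ah' : R; wh : R; fh : 'rV[R]_n }.

Section D2EAL.
Variables (R : realType) (n N : nat)
  (l : 'rV[R]_n -> 'rV[R]_n -> R)
  (f : nat -> 'I_N -> 'rV[R]_n)
  (y : nat -> 'rV[R]_n)
  (Omega : nat -> 'I_N -> {set 'I_N})
  (eta_a eta_w : R).

Definition alpha (s : 'I_N -> st R n) (i : 'I_N) : R :=
  ah (s i) / (ah (s i) + ah' (s i)).

Definition fbar_of (s : 'I_N -> st R n) (t : nat) (i : 'I_N) : 'rV[R]_n :=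
  alpha s i *: f t.+1 i + (1 - alpha s i) *: fh (s i).

Definition soc_w (s : 'I_N -> st R n) (t : nat) (i j : 'I_N) : R :=
  if j \in Lam Omega t i
  then wh (s j) / \sum_(j' in Lam Omega t i) wh (s j')
  else 0.

Definition fhat_next (s : 'I_N -> st R n) (t : nat) (i : 'I_N) : 'rV[R]_n :=
  \sum_(j in Lam Omega t i) soc_w s t i j *: fbar_of s t j.

Definition step (s : 'I_N -> st R n) (t : nat) (i : 'I_N) : st R n :=
  St (ah (s i) * expR (- (eta_a * l (f t.+1 i) (y t.+1))))
     (ah' (s i) * expR (- (eta_a * l (fh (s i)) (y t.+1))))
     (wh (s i) * expR (- (eta_w * l (fbar_of s t i) (y t.+1))))
     (fhat_next s t i).

Fixpoint state (t : nat) : 'I_N -> st R n :=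
  match t with
  | 0 => fun i => St 1 1 1 (f 1 i)
  | t'.+1 => step (state t') t'
  end.

Definition fhat (t : nat) (i : 'I_N) : 'rV[R]_n := fh (state t i).
Definition fbar_next (t : nat) (i : 'I_N) : 'rV[R]_n := fbar_of (state t) t i.

Definition LT (T : nat) (i : 'I_N) : R := \sum_(t < T) l (f t.+1 i) (y t.+1).
Definition hatLminus (T : nat) (i : 'I_N) : R := \sum_(t < T) l (fhat t i) (y t.+1).
Definition barL (T : nat) (i : 'I_N) : R := \sum_(t < T) l (fbar_next t i) (y t.+1).
Definition hatL (T : nat) (i : 'I_N) : R := \sum_(t < T) l (fhat t.+1 i) (y t.+1).

(* Social regret R_i^S(T) = hat L_{T,i} - min_{j in Lambda_i(T)} bar L_{T,j}
   (i belongs to Lambda_i(T), so barL T i is a valid seed for the min). *)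
Definition social_regret (T : nat) (i : 'I_N) : R :=
  hatL T i - \big[Order.min/barL T i]_(j in Lam Omega T i) barL T j.

End D2EAL.

(* Main.v *)
Require Import Defs.
From HB Require Import structures.
From mathcomp Require Import all_boot all_order all_algebra.
From mathcomp Require Import all_classical all_reals all_analysis.
From mathcomp Require Import ring lra.
Import Order.TTheory GRing.Theory Num.Theory.
Import numFieldNormedType.Exports.
Local Open Scope ring_scope.

Section A.
Context {R : realType}.

Lemma mono_from_derive (f df : R -> R) (x : R) :
  (forall z : R, is_derive z (1:R) f (df z)) ->
  (forall z, 0 <= z -> 0 <= df z) -> 0 <= x -> f 0 <= f x.
Proof.
move=> hd hpos x0.
have cf : continuous f.
  move=> z; apply: differentiable_continuous; apply/derivable1_diffP.
  by case: (hd z).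
have [c cI eq] := @MVT_segment R f df 0 x x0 (fun z _ => hd z)
  (continuous_subspaceT cf).
rewrite -subr_ge0 eq mulr_ge0 // ?subr0 //.
apply: hpos. by move: cI; rewrite in_itv /= => /andP[].
Qed.

Lemma kfact (x : R) : 0 <= x -> 2 * (1 - expR (- x)) <= x * (1 + expR (- x)).
Proof.
move=> x0.
pose f := fun z : R => z * (1 + expR (- z)) - 2 * (1 - expR (- z)).
have hdf (z : R) : is_derive z (1:R) f (1 - expR (- z) * (1 + z)).
  rewrite /f. apply: trigger_derive. rewrite /GRing.scale /=. ring.
have := @mono_from_derive f _ x hdf _ x0.
rewrite /f oppr0 expR0 !mul0r subrr mulr0 subr0.
move=> h; rewrite -subr_ge0; apply: h => z z0.
rewrite subr_ge0.
have h1 := expR_ge1Dx z.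
have h2 : expR (- z) * expR z = 1 by rewrite -expRD addNr expR0.
have h3 := expR_gt0 (- z).
nra.
Qed.

Lemma hoeff (m eta : R) : 0 <= m <= 1 -> 0 <= eta ->
  1 - m + m * expR (- eta) <= expR (- (eta * m) + eta ^+ 2 / 8).
Proof.
move=> /andP[m0 m1] e0.
pose G := fun z : R => (1 - m + m * expR (- z)) * expR (z * m - z ^+ 2 / 8).
pose f := fun z : R => - G z.
have hdf (z : R) : is_derive z (1:R) f
   (- ((- (m * expR (- z)) + (1 - m + m * expR (- z)) * (m - z / 4)) * expR (z * m - z ^+ 2 / 8))).
  rewrite /f /G. apply: trigger_derive. by rewrite /GRing.scale /=; field.
have := @mono_from_derive f _ eta hdf _ e0.
rewrite /f /G /=.
have -> : (0:R) * m - 0 ^+ 2 / 8 = 0 by rewrite expr2 !mul0r subr0.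
rewrite oppr0 !expR0 !mulr1 subrK.
have key : forall z : R, 0 <= z -> 0 <= - ((- (m * expR (- z)) + (1 - m + m * expR (- z)) * (m - z / 4)) *
     expR (z * m - z ^+ 2 / 8)).
  move=> z z0; rewrite -mulNr mulr_ge0 // ?expR_ge0 //.
  set v := expR (- (z / 2)).
  have hu : expR (- z) = v * v by rewrite /v -expRD -opprD -splitr.
  rewrite hu.
  have hk := kfact (z / 2) (divr_ge0 z0 (ler0n _ 2)).
  rewrite -/v in hk.
  have v0 : 0 < v := expR_gt0 _.
  have v1 : v <= 1 by rewrite /v expR_le1 oppr_le0 divr_ge0.
  set D := 1 - m + m * (v * v).
  have D0 : 0 <= D by rewrite /D; nra.
  have h1 : m * (1 - m) * (1 + v) ^+ 2 <= D.
    have -> : D = m * (1 - m) * (1 + v) ^+ 2 + (1 - m - m * v) ^+ 2 by rewrite /D; ring.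
    by rewrite lerDl sqr_ge0.
  have h2 : D * (1 - v) <= D * (z / 4) * (1 + v).
    have : D * (2 * (1 - v)) <= D * (z / 2 * (1 + v)) by rewrite ler_wpM2l.
    have -> : z / 2 = 2 * (z / 4) by field.
    nra.
  have h3 : m * (1 - m) * (1 + v) ^+ 2 * (1 - v) <= D * (1 - v) by rewrite ler_wpM2r // subr_ge0.
  have h4 : m * (1 - m) * (1 - v) * (1 + v) <= D * (z / 4).
    rewrite -(ler_pM2r (_ : 0 < 1 + v)); last by lra.
    apply: le_trans h2; apply: le_trans h3; rewrite expr2; lra.
  have -> : - (- (m * (v * v)) + D * (m - z / 4)) = D * (z / 4) - m * (1 - m) * (1 - v) * (1 + v) by rewrite /D; ring.
  by rewrite subr_ge0.
move=> h; have {h key} := h key.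
have hE : expR (- (eta * m) + eta ^+ 2 / 8) * expR (eta * m - eta ^+ 2 / 8) = 1.
  by rewrite -expRD (_ : _ + _ = 0) ?expR0 //; ring.
have := expR_gt0 (eta * m - eta ^+ 2 / 8).
have := expR_gt0 (- (eta * m) + eta ^+ 2 / 8).
set E := expR (eta * m - eta ^+ 2 / 8).
set F := expR (- (eta * m) + eta ^+ 2 / 8).
set D := 1 - m + m * expR (- eta).
move: hE; rewrite -/E -/F => hE F0 E0.
rewrite lerN2 => h.
have -> : D = D * E * F by rewrite -mulrA [E * F]mulrC hE mulr1.
by rewrite ler_piMl // ltW.
Qed.

Lemma chord (x eta : R) : 0 <= x <= 1 ->
  expR (- (eta * x)) <= 1 - x + x * expR (- eta).
Proof.
move=> /andP[x0 x1].
have := @convex_expR R (Itv01 x0 x1) (- eta) 0.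
rewrite !convRE /= /unstable.onem expR0 mulr0 addr0 mulr1 mulrN => h.
by rewrite mulrC addrC.
Qed.

Lemma hedge (I : finType) (S : {pred I}) (w x : I -> R) (eta : R) (a : I) :
  a \in S -> (forall j, 0 < w j) -> (forall j, 0 <= x j <= 1) -> 0 <= eta ->
  \sum_(j in S) w j * expR (- (eta * x j)) <=
  (\sum_(j in S) w j) *
     expR (- (eta * ((\sum_(j in S) w j * x j) / \sum_(j in S) w j)) + eta ^+ 2 / 8).
Proof.
move=> aS w0 x01 e0.
set W := \sum_(j in S) w j.
set M := \sum_(j in S) w j * x j.
have W0 : 0 < W.
  rewrite /W (bigD1 a) //= ltr_pwDl //; apply: sumr_ge0 => j _; exact: ltW.
have M0 : 0 <= M.
  apply: sumr_ge0 => j _; case/andP: (x01 j) => ? ?; apply: mulr_ge0 => //; exact: ltW.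
have MW : M <= W.
  apply: ler_sum => j _; case/andP: (x01 j) => ? ?; apply: ler_piMr => //; exact: ltW.
apply: (@le_trans _ _ (\sum_(j in S) w j * (1 - x j + x j * expR (- eta)))).
  by apply: ler_sum => j _; rewrite ler_pM2l // chord.
have -> : \sum_(j in S) w j * (1 - x j + x j * expR (- eta)) =
   W * (1 - M / W + M / W * expR (- eta)).
  rewrite /W /M.
  rewrite (eq_bigr (fun j => w j - w j * x j + w j * x j * expR (- eta))); last by move=> j _; ring.
  rewrite big_split /= sumrB -mulr_suml.
  set W' := \sum_(j in S) w j; set M' := \sum_(j in S) w j * x j.
  field. by rewrite gt_eqF.
rewrite ler_pM2l //; apply: hoeff => //.
apply/andP; split; first by apply: divr_ge0 => //; exact: ltW.
by rewrite ler_pdivrMr // mul1r.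
Qed.
End A.

Lemma jensen_seq (R : realType) (n : nat) (A Y : 'rV[R]_n -> Prop)
  (l : 'rV[R]_n -> 'rV[R]_n -> R) (yv : 'rV[R]_n) (I : Type)
  (w : I -> R) (x : I -> 'rV[R]_n) :
  convex_subset A -> convex_in_first A Y l -> Y yv ->
  (forall j, 0 < w j) -> (forall j, A (x j)) ->
  forall s a,
  A ((\sum_(j <- a :: s) w j)^-1 *: \sum_(j <- a :: s) w j *: x j) /\
  l ((\sum_(j <- a :: s) w j)^-1 *: \sum_(j <- a :: s) w j *: x j) yv <=
    (\sum_(j <- a :: s) w j)^-1 * \sum_(j <- a :: s) w j * l (x j) yv.
Proof.
move=> cA cl Yy w0 xA; elim=> [|b s IH] a.
  rewrite !big_cons !big_nil !addr0 scalerA mulVf ?gt_eqF // scale1r.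
  by split => //; rewrite mulrA mulVf ?gt_eqF // mul1r.
have [IHA IHl] := IH b.
set W' := \sum_(j <- b :: s) w j.
set S' := \sum_(j <- b :: s) w j *: x j.
set L' := \sum_(j <- b :: s) w j * l (x j) yv.
have -> : \sum_(j <- a :: b :: s) w j = w a + W' by rewrite big_cons.
have -> : \sum_(j <- a :: b :: s) w j *: x j = w a *: x a + S' by rewrite big_cons.
have -> : \sum_(j <- a :: b :: s) w j * l (x j) yv = w a * l (x a) yv + L' by rewrite big_cons.
set z := W'^-1 *: S'.
have W'0 : 0 < W' by rewrite /W' big_cons ltr_pwDl // sumr_ge0 // => j _; exact: ltW.
have hS : S' = W' *: z by rewrite /z scalerA mulfV ?gt_eqF // scale1r.
set W := w a + W'.
have W0 : 0 < W by rewrite /W addr_gt0.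
set lam := w a / W.
have lam01 : 0 <= lam <= 1.
  apply/andP; split; first by apply: divr_ge0 => //; exact: ltW.
  by rewrite /lam ler_pdivrMr // mul1r /W lerDl ltW.
have e : W^-1 *: (w a *: x a + S') = lam *: x a + (1 - lam) *: z.
  rewrite hS scalerDr !scalerA /lam; congr (_ + _); first by rewrite mulrC.
  congr (_ *: _); rewrite /W; field; rewrite ?gt_eqF //.
rewrite e; split; first exact: cA.
apply: le_trans (cl _ _ _ _ (xA a) IHA Yy lam01) _.
have h1 : (1 - lam) * l z yv <= (1 - lam) * (W'^-1 * L').
  by rewrite ler_wpM2l // subr_ge0; case/andP: lam01.
apply: le_trans (lerD (lexx _) h1) _.
rewrite le_eqVlt; apply/orP; left; apply/eqP.
rewrite /lam /W; field; rewrite ?gt_eqF //.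
Qed.

Lemma jensen_set (R : realType) (n : nat) (A Y : 'rV[R]_n -> Prop)
  (l : 'rV[R]_n -> 'rV[R]_n -> R) (yv : 'rV[R]_n) (I : finType)
  (w : I -> R) (x : I -> 'rV[R]_n) (S : {set I}) (j0 : I) :
  convex_subset A -> convex_in_first A Y l -> Y yv ->
  (forall j, 0 < w j) -> (forall j, A (x j)) -> j0 \in S ->
  A ((\sum_(j in S) w j)^-1 *: \sum_(j in S) w j *: x j) /\
  l ((\sum_(j in S) w j)^-1 *: \sum_(j in S) w j *: x j) yv <=
    (\sum_(j in S) w j)^-1 * \sum_(j in S) w j * l (x j) yv.
Proof.
move=> cA cl Yy w0 xA jS.
have : j0 \in enum S by rewrite mem_enum.
case E: (enum S) => [//|a s] _.
have := @jensen_seq R n A Y l yv I w x cA cl Yy w0 xA s a.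
by rewrite -E !big_enum.
Qed.

Lemma sum_subset_le (R : realType) (I : finType) (A B : {set I}) (F : I -> R) :
  B \subset A -> (forall j, 0 <= F j) -> \sum_(j in B) F j <= \sum_(j in A) F j.
Proof.
move=> BA F0; rewrite [X in _ <= X](big_setID B) /= (finset.setIidPr BA) lerDl.
by apply: sumr_ge0 => j _.
Qed.

Theorem corollary2 (R : realType) (n N : nat)
  (A Y : 'rV[R]_n -> Prop) (l : 'rV[R]_n -> 'rV[R]_n -> R)
  (f : nat -> 'I_N -> 'rV[R]_n) (y : nat -> 'rV[R]_n)
  (Omega : nat -> 'I_N -> {set 'I_N})
  (T : nat) (eta_a eta_w : R) (i : 'I_N) :
  convex_subset A -> convex_subset Y ->
  (forall a yv, A a -> Y yv -> 0 <= l a yv <= 1) ->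
  convex_in_first A Y l ->
  (forall t, Y (y t)) ->
  (forall t j, A (f t j)) ->
  (forall t j k, (k \in Omega t j) = (j \in Omega t k)) ->
  (1 <= T)%N ->
  (2 <= #|Lam Omega 0 i|)%N ->
  (forall t, (1 <= t <= T)%N -> Omega t i \subset Omega t.-1 i) ->
  0 < eta_a ->
  eta_w = Num.sqrt (8 * ln (#|Lam Omega 0 i|%:R) / T%:R) ->
  social_regret l f y Omega eta_a eta_w T i
    <= Num.sqrt (T%:R / 2 * ln (#|Lam Omega 0 i|%:R)).
Proof.
move=> cA cY lb cl Yy fA _ T1 d2 sub ea eta_def.
pose S := state l f y Omega eta_a eta_w.
have pos : forall t j, [/\ 0 < ah (S t j), 0 < ah' (S t j) & 0 < wh (S t j)].
  elim=> [|t IH] j /=; first by rewrite !ltr01.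
  have [h1 h2 h3] := IH j.
  by split; apply: mulr_gt0 => //; exact: expR_gt0.
have whp t j : 0 < wh (S t j) by case: (pos t j).
have alpha01 t j : 0 <= alpha (S t) j <= 1.
  have [h1 h2 _] := pos t j.
  rewrite /alpha; apply/andP; split; first by apply: divr_ge0; apply: ltW => //; exact: addr_gt0.
  by rewrite ler_pdivrMr ?addr_gt0 // mul1r lerDl ltW.
have fhat_eq : forall t j, fh (S t.+1 j) =
   (\sum_(k in Lam Omega t j) wh (S t k))^-1 *:
      \sum_(k in Lam Omega t j) wh (S t k) *: fbar_of f (S t) t k.
  move=> t j /=; rewrite /fhat_next scaler_sumr; apply: eq_bigr => k kin.
  by rewrite /soc_w kin scalerA mulrC.
have jinLam t j : j \in Lam Omega t j by rewrite /Lam setU11.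
have inA : forall t j, A (fh (S t j)) /\ A (fbar_of f (S t) t j).
  elim=> [|t IH] j.
    have h : A (fh (S 0 j)) by exact: fA.
    split => //; rewrite /fbar_of; apply: cA => //; exact: alpha01.
  have h : A (fh (S t.+1 j)).
    rewrite fhat_eq.
    have [] := @jensen_set R n A Y l (y 0) _ (fun k => wh (S t k)) (fun k => fbar_of f (S t) t k)
       (Lam Omega t j) j cA cl (Yy 0) (whp t) (fun k => (IH k).2) (jinLam t j) => //.
  split => //; rewrite /fbar_of; apply: cA => //; exact: alpha01.
have lossb t j : 0 <= l (fbar_of f (S t) t j) (y t.+1) <= 1.
  exact: lb _ _ (inA t j).2 (Yy _).
have whstep t j : wh (S t.+1 j) = wh (S t j) * expR (- (eta_w * l (fbar_of f (S t) t j) (y t.+1))) by [].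
have eta0 : 0 <= eta_w by rewrite eta_def sqrtr_ge0.
pose W t := \sum_(k in Lam Omega t i) wh (S t k).
pose H t := \sum_(tau < t) l (fh (S tau.+1 i)) (y tau.+1).
set d := #|Lam Omega 0 i|.
have claim : forall t, (t <= T)%N ->
    W t <= d%:R * expR (- (eta_w * H t) + t%:R * (eta_w ^+ 2 / 8)).
  elim=> [|t IH] tT.
    rewrite /W /H big_ord0 mulr0 oppr0 mul0r addr0 expR0 mulr1.
    rewrite (eq_bigr (fun _ => 1)); last by move=> k _ /=.
    by rewrite sumr_const.
  have IH' := IH (ltnW tT).
  set x := fun k => l (fbar_of f (S t) t k) (y t.+1).
  have e1 : W t.+1 = \sum_(k in Lam Omega t.+1 i) wh (S t k) * expR (- (eta_w * x k)).
    by apply: eq_bigr => k _.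
  have sLam : Lam Omega t.+1 i \subset Lam Omega t i.
    by rewrite /Lam; apply: finset.setUS; exact: (sub t.+1).
  have e2 := @sum_subset_le R _ _ _ (fun k => wh (S t k) * expR (- (eta_w * x k))) sLam
     (fun k => mulr_ge0 (ltW (whp t k)) (expR_ge0 _)).
  have e3 := @hedge R _ (Lam Omega t i) (fun k => wh (S t k)) x eta_w i (jinLam t i) (whp t) (lossb t) eta0.
  have [_ e4] := @jensen_set R n A Y l (y t.+1) _ (fun k => wh (S t k)) (fun k => fbar_of f (S t) t k)
       (Lam Omega t i) i cA cl (Yy _) (whp t) (fun k => (inA t k).2) (jinLam t i).
  rewrite -fhat_eq -/x in e4.
  have W0 : 0 <= W t by apply: sumr_ge0 => k _; exact: ltW.
  rewrite e1; apply: le_trans e2 _; apply: le_trans e3 _.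
  rewrite -/(W t).
  have e5 : W t * expR (- (eta_w * ((\sum_(j in Lam Omega t i) wh (S t j) * x j) / W t)) + eta_w ^+ 2 / 8)
     <= W t * expR (- (eta_w * l (fh (S t.+1 i)) (y t.+1)) + eta_w ^+ 2 / 8).
    rewrite ler_wpM2l // ler_expR lerD2r lerN2 ler_wpM2l // mulrC; exact: e4.
  apply: le_trans e5 _.
  apply: le_trans (ler_wpM2r (expR_ge0 _) IH') _.
  rewrite -mulrA -expRD /H big_ord_recr /= -[(t.+1)%:R]natr1.
  rewrite le_eqVlt; apply/orP; left; apply/eqP; congr (_ * expR _); ring.
have wT : forall t j, wh (S t j) = expR (- (eta_w * barL l f y Omega eta_a eta_w t j)).
  elim=> [|t IH] j; first by rewrite /barL big_ord0 mulr0 oppr0 expR0.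
  rewrite whstep IH -expRD /barL big_ord_recr /=; congr expR.
  rewrite /fbar_next -/S; ring.
have hatLE : hatL l f y Omega eta_a eta_w T i = H T by [].
have d1 : 1 < (d%:R : R) by rewrite ltr1n.
set L := ln (d%:R : R).
have L0 : 0 < L by rewrite /L ln_gt0.
have T0 : 0 < (T%:R : R) by rewrite ltr0n.
have etasq : eta_w ^+ 2 = 8 * L / T%:R.
  by rewrite eta_def sqr_sqrtr // divr_ge0 // mulr_ge0 // ltW.
have etap : 0 < eta_w.
  rewrite lt0r eta0 andbT; apply/negP => /eqP e0.
  by move: etasq; rewrite e0 expr0n /= => /esym/eqP; rewrite mulf_eq0 invr_eq0 !gt_eqF ?mulr_gt0.
set B := Num.sqrt (T%:R / 2 * L).
have etaB : eta_w * B = 2 * L.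
  rewrite eta_def /B -sqrtrM; last by rewrite divr_ge0 // mulr_ge0 // ltW.
  rewrite (_ : 8 * L / T%:R * (T%:R / 2 * L) = (2 * L) ^+ 2); last by field; rewrite gt_eqF.
  by rewrite sqrtr_sqr ger0_norm // mulr_ge0 // ltW.
have key : forall j, j \in Lam Omega T i -> H T - B <= barL l f y Omega eta_a eta_w T j.
  move=> j jT.
  have h1 : wh (S T j) <= W T.
    rewrite /W (bigD1 j) //= lerDl; apply: sumr_ge0 => k _; exact: ltW.
  have h2 := le_trans h1 (claim T (leqnn T)).
  rewrite wT in h2.
  have h3 : - (eta_w * barL l f y Omega eta_a eta_w T j) <= L + (- (eta_w * H T) + T%:R * (eta_w ^+ 2 / 8)).
    rewrite -ler_expR expRD /L lnK // posrE ltr0n (ltn_trans _ d2) //.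
  have h4 : T%:R * (eta_w ^+ 2 / 8) = L by rewrite etasq; field; rewrite gt_eqF.
  rewrite h4 in h3.
  rewrite -(ler_pM2l etap) mulrBr etaB; lra.
rewrite /social_regret hatLE -/B lerBlDr -lerBlDl.
apply: (big_ind (fun v => H T - B <= v)).
- by apply: key; exact: jinLam.
- by move=> u v hu hv; rewrite le_min hu hv.
- exact: key.
Qed.
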